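(* Let $N>2$ be an odd positive integer, $K$ a positive integer, and $0<Z_x\le N$, $0<Z_y\le K$ integers. Let $f:\mathbb{Z}_N\to\mathbb{Z}_K$ be such that for all integers $a,b$ with $-Z_x<a<Z_x$, $a\ne0$, $-Z_y<b<Z_y$, the equation $f(x+a)-f(x)=b$ (with $x+a$ computed in $\mathbb{Z}_N$ and the equation in $\mathbb{Z}_K$) has at most one solution $x\in\mathbb{Z}_N$. For $0\le k<N$ let $\mathbf{a}_k=(a_k(0),\dots,a_k(K-1))$ with $a_k(t)=\omega_K^{tf(k)}$. Let $\mathbf{h}_0,\dots,\mathbf{h}_{N-1}$ be unimodular complex sequences of length $N$ such that for all $0\le i\ne j<N$ and all $0\le v<N$, $$\Big|\sum_{n=0}^{N-1}h_i(n)h_j^*(n)\Big|\le 1,\qquad \Big|\sum_{n=0}^{N-1}h_i(n)h_j^*(n)\omega_N^{nv}\Big|<N.$$ For $0\le i<N$ define $\mathbf{s}_i$ of length $NK$ by $s_i(tN+k)=h_i(k)a_k(t)$ for $0\le t<K$, $0\le k<N$, and let $\mathcal{S}=\{\mathbf{s}_0,\dots,\mathbf{s}_{N-1}\}$. Then $\mathcal{S}$ is an aperiodic $(N,NK,\Pi,K+Z_x-1)$-LAZ sequence set with $\Pi=(-Z_x,Z_x)\times(-Z_y,Z_y)$; that is, for all integers $(\tau,v)\in\Pi$: $|\hat{AF}_{\mathbf{s}_i}(\tau,v)|\le K+Z_x-1$ for every $i$ whenever $(\tau,v)\ne(0,0)$, and $|\hat{AF}_{\mathbf{s}_i,\mathbf{s}_j}(\tau,v)|\le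 K+Z_x-1$ for all $i\ne j$.
   Context: $\omega_L=e^{2\pi\sqrt{-1}/L}$, $z^*$ is complex conjugation, and a sequence is unimodular if all entries have modulus 1. For sequences $\mathbf{a},\mathbf{b}$ of length $L$, the aperiodic cross-ambiguity function is $\hat{AF}_{\mathbf{a},\mathbf{b}}(\tau,v)=\sum_{t=0}^{L-1-\tau}a(t)b^*(t+\tau)\omega_L^{vt}$ for $0\le\tau\le L-1$, $\hat{AF}_{\mathbf{a},\mathbf{b}}(\tau,v)=\sum_{t=-\tau}^{L-1}a(t)b^*(t+\tau)\omega_L^{vt}$ for $-L<\tau<0$, and $0$ for $|\tau|\ge L$; $\hat{AF}_{\mathbf{a}}=\hat{AF}_{\mathbf{a},\mathbf{a}}$. A set of $M$ sequences of length $L$ is an $(M,L,\Pi,\hat\theta)$-LAZ aperiodic sequence set if the maximum of $|\hat{AF}_{\mathbf{a}}(\tau,v)|$ over sequences in the set and $(0,0)\ne(\tau,v)\in\Pi$, and of $|\hat{AF}_{\mathbf{a},\mathbf{b}}(\tau,v)|$ over distinct $\mathbf{a},\mathbf{b}$ in the set and $(\tau,v)\in\Pi$, is $\hat\theta$ (here: at most $\hat\theta$). *)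

(* Defs.v *)
From HB Require Import structures.
From mathcomp Require Import all_boot all_order all_algebra.
From mathcomp Require Import reals trigo.
From mathcomp Require Import complex.
Set Implicit Arguments. Unset Strict Implicit. Unset Printing Implicit Defensive.
Import Order.TTheory GRing.Theory Num.Theory.
Local Open Scope ring_scope.
Local Open Scope complex_scope.

Definition omega (R : realType) (L : nat) : R[i] :=
  (cos (2 * pi / L%:R)) +i* (sin (2 * pi / L%:R)).

Lemma ord_gt0 (N : nat) (w : 'I_N) : (0 < N)%N.
Proof. exact: leq_ltn_trans (leq0n w) (ltn_ord w). Qed.

Definition ord_of_nat (N : nat) (w : 'I_N) (n : nat) : 'I_N :=
  Ordinal (ltn_pmod n (ord_gt0 w)).

Definition ord_of_int (N : nat) (w : 'I_N) (z : int) : 'I_N :=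
  ord_of_nat w `|(z %% N%:Z)%Z|%N.

Definition addZN (N : nat) (x : 'I_N) (a : int) : 'I_N :=
  ord_of_int x (x%:Z + a).

(* aperiodic cross-ambiguity function of two sequences of length L
   (sequences are functions nat -> R[i], only entries < L are used) *)
Definition AF (R : realType) (L : nat) (a b : nat -> R[i]) (tau v : int) : R[i] :=
  if (0 <= tau)%R then
    \sum_(0 <= t < L - `|tau|%N) a t * (b (t + `|tau|%N)%N)^* * omega R L ^ (v * t%:Z)
  else
    \sum_(`|tau|%N <= t < L) a t * (b (t - `|tau|%N)%N)^* * omega R L ^ (v * t%:Z).

(* the sequences s_i(tN + k) = h_i(k) a_k(t), a_k(t) = omega_K^(t f(k)) *)
Definition seq_s (R : realType) (N K : nat) (f : 'I_N -> 'I_K)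
    (h : 'I_N -> nat -> R[i]) (i : 'I_N) (n : nat) : R[i] :=
  let k := ord_of_nat i n in
  h i k * omega R K ^+ ((n %/ N) * f k)%N.

(* Main.v *)
Require Import Defs.
From HB Require Import structures.
From mathcomp Require Import all_boot all_order all_algebra.
From mathcomp Require Import reals trigo.
From mathcomp Require Import complex.
From mathcomp Require Import ring lra zify.
From Stdlib Require Import Lia.
Import Order.TTheory GRing.Theory Num.Theory.
Local Open Scope ring_scope.
Local Open Scope complex_scope.

Section S.
Variable R : realType.
Definition E (x : R) : R[i] := cos x +i* sin x.
Lemma EM x y : E x * E y = E (x + y).
Proof. rewrite /E cosD sinD /=. congr (_ +i* _); ring. Qed.
Lemma E0 : E 0 = 1.
Proof. by rewrite /E cos0 sin0. Qed.
Lemma EX x n : E x ^+ n = E (n%:R * x).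
Proof. elim: n => [|n IH]; first by rewrite expr0 mul0r E0.
by rewrite exprS IH EM -{1}(mul1r x) -mulrDl -natr1 addrC. Qed.
Lemma EV x : (E x)^-1 = E (- x).
Proof. by apply: mulr1_eq; rewrite EM subrr E0. Qed.
Lemma Ez x (z : int) : E x ^ z = E (z%:~R * x).
Proof. case: z => n. by rewrite /exprz EX.
by rewrite /exprz EX EV NegzE mulrNz mulNr. Qed.
Lemma EJ x : (E x)^* = E (- x).
Proof. by rewrite /E cosN sinN. Qed.
Lemma normE x : `|E x| = 1.
Proof. by rewrite normc_def /= cos2Dsin2 sqrtr1. Qed.
Lemma E2pi (z : int) : E (z%:~R * (2 * pi)) = 1.
Proof. rewrite -Ez. have -> : E (2 * pi) = 1.
  by rewrite /E (_ : 2 * pi = pi *+ 2) ?cos2pi ?sin2pi // mulr2n; ring.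
by rewrite exp1rz. Qed.
Lemma cos_ne1 (y : R) : 0 < y < 2 * pi -> cos y != 1.
Proof.
move=> /andP[y0 y2]; apply/eqP => cy.
have : 0 < sin (y / 2) by apply: sin_gt0_pi; apply/andP; split; lra.
have : cos y = 1 - 2 * sin (y/2) ^+ 2.
  have e : y = (y/2) *+ 2 by rewrite mulr2n -splitr.
  rewrite {1}e cos_mulr2n cos2sin2 mulr2n; ring.
by rewrite cy => h; nra.
Qed.
Lemma Ene1 (K : nat) (m : int) : (0 < K)%N -> (m %% K)%Z != 0 ->
  E (m%:~R * (2 * pi / K%:R)) != 1.
Proof.
move=> K0 mK.
have Kr : (K%:R : R) != 0 by rewrite pnatr_eq0 -lt0n.
rewrite {1}(divz_eq m K) intrD intrM -[(K%:Z)%:~R]/(K%:R) mulrDl.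
rewrite -EM (_ : _ * K%:R * _ = (m %/ K)%Z%:~R * (2 * pi)); last by field.
rewrite E2pi mul1r /E; apply/negP => /eqP [] cy _; move: cy; apply/eqP/cos_ne1.
have r0 : (0 < m %% K)%Z by rewrite lt0r mK modz_ge0 // eqz_nat -lt0n.
have rK : (m %% K < K)%Z by rewrite ltz_pmod.
have r0' : (0 : R) < (m %% K)%Z%:~R by rewrite ltr0z.
have rK' : (m %% K)%Z%:~R < (K%:R : R) by rewrite -[K%:R]/((K%:Z)%:~R) ltr_int.
have K0' : (0 : R) < K%:R by rewrite ltr0n.
have pi0 := pi_gt0 R.
apply/andP; split.
  by apply: mulr_gt0 => //; apply: divr_gt0 => //; lra.
have h1 : (m %% K)%Z%:~R / K%:R < (1 : R) by rewrite ltr_pdivrMr // mul1r.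
rewrite (_ : (m %% K)%Z%:~R * (2 * pi / K%:R) = 2 * pi * ((m %% K)%Z%:~R / K%:R)); last by rewrite mulrCA.
by rewrite -{2}(mulr1 (2*pi)) ltr_pM2l //; lra.
Qed.
Lemma sum_split (V : zmodType) (N K : nat) (G : nat -> V) :
  \sum_(0 <= n < (K * N)%N) G n = \sum_(0 <= t < K) \sum_(0 <= k < N) G (t * N + k)%N.
Proof.
elim: K => [|K IH]; first by rewrite mul0n !big_geq.
rewrite big_nat_recr //= mulSnr (big_cat_nat (n := K * N)) ?leq_addr //= IH.
congr (_ + _).
rewrite -{1}[(K * N)%N]add0n big_addn addKn.
by apply: eq_bigr => k _; rewrite addnC.
Qed.
Lemma geo0 {w : R[i]} {K : nat} : w != 1 -> w ^+ K = 1 -> \sum_(0 <= t < K) w ^+ t = 0.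
Proof.
move=> w1 wK; have := subrX1 w K; rewrite wK subrr big_mkord => /esym/eqP.
by rewrite mulf_eq0 subr_eq0 (negbTE w1) => /eqP.
Qed.
Lemma geo_bound (K : nat) (m : int) (c : nat) : (0 < K)%N -> (c <= 1)%N ->
  `|\sum_(0 <= t < K - c) E (m%:~R * (2 * pi / K%:R)) ^+ t| <=
     (if (m %% K == 0)%Z then K else c)%:R.
Proof.
move=> K0 c1; case: ifP => mK.
  apply: le_trans (ler_norm_sum _ _ _) _.
  under eq_bigr do rewrite normrX normE expr1n.
  by rewrite sumr_const_nat ler_nat subn0 leq_subr.
have Kr : (K%:R : R) != 0 by rewrite pnatr_eq0 -lt0n.
set w := E _.
have wK : w ^+ K = 1.
  by rewrite /w EX (_ : K%:R * (m%:~R * (2 * pi / K%:R)) = m%:~R * (2 * pi)) ?E2pi //; field.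
have w1 : w != 1 by apply: Ene1 => //; rewrite mK.
have S0 := geo0 w1 wK.
case: c c1 => [|[|//]] _; first by rewrite subn0 S0 normr0.
move: S0; have -> : K = K.-1.+1 by rewrite prednK.
rewrite big_nat_recr //= subn1 /= => /eqP; rewrite addr_eq0 => /eqP ->.
by rewrite normrN normrX normE expr1n.
Qed.
Lemma sum_split' (V : zmodType) (N K : nat) (G : nat -> V) :
  \sum_(0 <= n < (N * K)%N) G n = \sum_(0 <= t < K) \sum_(0 <= k < N) G (t * N + k)%N.
Proof. by rewrite mulnC sum_split. Qed.

Definition kk {N : nat} (k : 'I_N) (s : nat) : 'I_N := ord_of_nat k (k + s).
Definition cc {N : nat} (k : 'I_N) (s : nat) : nat := ((k + s) %/ N)%N.
Definition mm {N K : nat} (f : 'I_N -> 'I_K) (k : 'I_N) (s : nat) (v : int) : int :=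
  (f k)%:Z - (f (kk k s))%:Z + v.
Definition phase {N K : nat} (f : 'I_N -> 'I_K) (k : 'I_N) (s : nat) (v : int) : R :=
  (v * k%:Z)%:~R * (2 * pi / (N * K)%N%:R) - ((cc k s * f (kk k s))%N)%:R * (2 * pi / K%:R).

Lemma regroup (A B : R[i]) a b c d e : a + b + c = d + e ->
  A * E a * (B * E b) * E c = A * B * E d * E e.
Proof.
move=> H; have X : E a * E b * E c = E d * E e by rewrite !EM H.
transitivity (A * B * (E a * E b * E c)); first by ring.
by rewrite X; ring.
Qed.

Lemma cM (x y : R[i]) : (x * y)^* = x^* * y^*.
Proof. exact: rmorphM. Qed.
Lemma cMn (x y : R[i]) : Num.conj (x * y) = Num.conj x * Num.conj y.
Proof. exact: rmorphM. Qed.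
Lemma EJn x : Num.conj (E x) = E (- x).
Proof. exact: EJ. Qed.
Lemma oE L : omega R L = E (2 * pi / L%:R). Proof. by []. Qed.

Lemma decomp N K (f : 'I_N -> 'I_K) (h : 'I_N -> nat -> R[i]) i j s v :
  (0 < N)%N -> (0 < K)%N -> (s < N)%N ->
  \sum_(0 <= n < (N * K)%N - s) seq_s f h i n * (seq_s f h j (n + s)%N)^* * omega R (N * K)%N ^ (v * n%:Z)
  = \sum_(k < N) (h i k * (h j (kk k s))^* * E (phase f k s v)) *
      \sum_(0 <= t < K - cc k s) E ((mm f k s v)%:~R * (2 * pi / K%:R)) ^+ t.
Proof.
move=> N0 K0 sN.
rewrite (big_nat_widen _ _ (N * K)%N) ?leq_subr // big_mkcond /= sum_split' exchange_big /=.
rewrite big_mkord; apply: eq_bigr => k _.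
rewrite mulr_sumr [RHS](big_nat_widen _ _ K) ?leq_subr // [RHS]big_mkcond /=.
apply: eq_big_nat => t /andP[_ tK].
have kN := ltn_ord k.
have e := divn_eq (k + s) N.
have rN : ((k + s) %% N < N)%N by rewrite ltn_pmod.
have -> : (t * N + k < N * K - s)%N = (t < K - cc k s)%N.
  rewrite /cc; apply/idP/idP => H; nia.
case: ifP => // tc.
rewrite /seq_s /=.
have o1 : ord_of_nat i (t * N + k) = k.
  by apply: val_inj; rewrite /= modnMDl modn_small.
have d1 : ((t * N + k) %/ N = t)%N by rewrite divnMDl // divn_small // addn0.
have o2 : ord_of_nat j (t * N + k + s) = kk k s.
  by apply: val_inj; rewrite /= -addnA modnMDl.
have d2 : ((t * N + k + s) %/ N = t + cc k s)%N by rewrite -addnA divnMDl.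
have m1 : ((t * N + k) %% N = k)%N by rewrite modnMDl modn_small.
have m2 : ((t * N + k + s) %% N = (k + s) %% N)%N by rewrite -addnA modnMDl.
rewrite o1 d1 o2 d2 m1 m2 !oE !EX Ez cMn EJn.
apply: regroup.
have Kr : (K%:R : R) != 0 by rewrite pnatr_eq0 -lt0n.
have Nr : (N%:R : R) != 0 by rewrite pnatr_eq0 -lt0n.
rewrite /phase /mm !intrD ?intrN !intrM -?pmulrn !natrM !natrD ?natrM.
field.
by rewrite Kr Nr.
Qed.
Definition Psum N K (f : 'I_N -> 'I_K) (h : 'I_N -> nat -> R[i]) i j s v :=
  \sum_(0 <= n < (N * K)%N - s) seq_s f h i n * (seq_s f h j (n + s)%N)^* *
     omega R (N * K)%N ^ (v * n%:Z).

Lemma kk0 N (k : 'I_N) : kk k 0 = k.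
Proof. by apply: val_inj; rewrite /= addn0 modn_small. Qed.
Lemma cc0 N (k : 'I_N) : cc k 0 = 0%N.
Proof. by rewrite /cc addn0 divn_small. Qed.
Lemma cc_le N (k : 'I_N) s : (s < N)%N -> (cc k s <= (N - s <= k))%N.
Proof.
move=> sN; have kN := ltn_ord k; rewrite /cc.
have [H|H] := leqP (N - s) k.
  have : ((k + s) %/ N < 2)%N by rewrite ltn_divLR //; lia.
  by case: ((k + s) %/ N)%N => [|[]].
by rewrite divn_small //; lia.
Qed.
Lemma count_tail N s : (s <= N)%N -> (\sum_(k < N) ((N - s <= k)%N : nat) = s)%N.
Proof.
move=> sN; rewrite -(big_mkord xpredT (fun k => ((N - s <= k)%N : nat))).
rewrite (big_cat_nat (n := N - s)) ?leq_subr //= big1_seq; last first.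
  by move=> k /andP[_]; rewrite mem_index_iota => /andP[_ H]; rewrite leqNgt H.
rewrite add0n (eq_big_nat _ _ (F2 := fun _ => 1%N)); last first.
  by move=> k /andP[-> _].
by rewrite sum_nat_const_nat muln1; lia.
Qed.
Lemma addZN_kk N (k : 'I_N) (s : nat) : addZN k s%:Z = kk k s.
Proof. by apply: val_inj; rewrite /= -[(k%:Z + s%:Z)]/((k + s)%N%:Z) modz_nat /= modn_mod. Qed.

Lemma natbound N K Zx (P : pred 'I_N) (c : 'I_N -> nat) s :
  (#|P| <= 1)%N -> (s < Zx)%N -> (s <= N)%N -> (forall k, c k <= (N - s <= k))%N ->
  (\sum_(k < N) (if P k then K else c k) <= K + Zx - 1)%N.
Proof.
move=> cP sZ sN hc.
apply: (@leq_trans (\sum_(k < N) ((if P k then K else 0%N) + (N - s <= k)))%N).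
  apply: leq_sum => k _; case: ifP => _; first exact: leq_addr.
  by rewrite add0n.
rewrite big_split /= count_tail // -big_mkcond /= sum_nat_const.
by move: cP; case: #|P| => [|[|//]] _; lia.
Qed.

Lemma Pbound N K Zx Zy (f : 'I_N -> 'I_K) (h : 'I_N -> nat -> R[i]) i j s v :
  (0 < N)%N -> (0 < K)%N -> (Zx <= N)%N -> (Zy <= K)%N ->
  (forall a b : int, (- Zx%:Z < a < Zx%:Z)%R -> a != 0 -> (- Zy%:Z < b < Zy%:Z)%R ->
     (#|[pred x : 'I_N |
         ((f (addZN x a))%:Z - (f x)%:Z == b %[mod K%:Z])%Z]| <= 1)%N) ->
  (forall (i : 'I_N) (n : 'I_N), `|h i n| = 1) ->
  (forall i j : 'I_N, i != j ->
     `|\sum_(n < N) h i n * (h j n)^*| <= 1) ->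
  (s < Zx)%N -> (- Zy%:Z < v < Zy%:Z)%R -> [|| s != 0%N, v != 0 | i != j] ->
  `|Psum N K f h i j s v| <= (K + Zx - 1)%:R.
Proof.
move=> N0 K0 ZxN ZyK hf hu hc sZx vZy cnd.
have sN : (s < N)%N by apply: leq_trans ZxN.
rewrite /Psum decomp //.
have [s0v0|nz] := boolP ((s == 0%N) && (v == 0)).
  case/andP: s0v0 => /eqP s0 /eqP v0; subst s v.
  have ij : i != j by move: cnd; rewrite !eqxx.
  have ph0 k : phase f k 0 0 = 0.
    by rewrite /phase cc0 mul0n mul0r mul0r subrr.
  have mm0 k : mm f k 0 0 = 0 by rewrite /mm kk0 subrr addr0.
  rewrite (eq_bigr (fun k : 'I_N => K%:R * (h i k * (h j k)^*))); last first.
    move=> k _; rewrite kk0 cc0 subn0 ph0 mm0 mul0r E0 mulr1.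
    by rewrite (eq_bigr (fun _ => 1)) ?sumr_const_nat ?subn0 1?mulrC // => t _; rewrite expr1n.
  rewrite -mulr_sumr normrM normr_nat.
  apply: le_trans (_ : K%:R * 1 <= _).
    by rewrite ler_wpM2l ?ler0n ?hc.
  rewrite mulr1 ler_nat; lia.
apply: le_trans (ler_norm_sum _ _ _) _.
apply: le_trans (_ : \sum_(k < N)
   (if (mm f k s v %% K == 0)%Z then K else cc k s)%:R <= _).
  apply: ler_sum => k _; rewrite normrM !normrM hu norm_conjC hu normE !mul1r.
  apply: geo_bound => //; have := @cc_le N k s sN; case: (N - s <= k)%N => H; first exact: H.
  exact: leq_trans H _.
rewrite -natr_sum ler_nat.
have [s0|s0] := eqVneq s 0%N.
  subst s; have v0 : v != 0 by move: nz; rewrite eqxx.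
  rewrite big1 // => k _; rewrite cc0 /mm kk0 subrr add0r.
  case: eqP => // /dvdz_mod0P; rewrite dvdzE => /dvdn_leq.
  have H : (0 < `|v|)%N by rewrite absz_gt0.
  move=> /(_ H) KH.
  have := vZy; rewrite -ltr_norml -abszE ltz_nat => H'.
  by move: (leq_ltn_trans KH (leq_trans H' ZyK)); rewrite ltnn.
apply: (@natbound N K Zx (fun k => (mm f k s v %% K == 0)%Z)); last first.
- by move=> k; apply: (@cc_le N k s sN).
- exact: ltnW.
- exact: sZx.
have hs : (- Zx%:Z < s%:Z < Zx%:Z)%R by apply/andP; split; lia.
apply: leq_trans (hf s%:Z v hs _ vZy); last by [].
apply/eq_leq/eq_card => k; rewrite /in_mem /= addZN_kk /mm.
rewrite eqz_mod_dvd (sameP eqP dvdz_mod0P).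
have -> : (f (kk k s))%:Z - (f k)%:Z - v = - ((f k)%:Z - (f (kk k s))%:Z + v) by ring.
by rewrite !dvdzE abszN.
Qed.
Lemma neg_red N K (f : 'I_N -> 'I_K) (h : 'I_N -> nat -> R[i]) i j s v :
  (0 < N)%N -> (0 < K)%N ->
  \sum_(s <= t < (N * K)%N) seq_s f h i t * Num.conj (seq_s f h j (t - s)%N) *
      omega R (N * K)%N ^ (v * t%:Z)
  = E ((v * s%:Z)%:~R * (2 * pi / (N * K)%N%:R)) * Num.conj (Psum N K f h j i s (- v)).
Proof.
move=> N0 K0.
rewrite /Psum rmorph_sum mulr_sumr -{1}[s]add0n big_addn.
apply: eq_bigr => n _; rewrite addnK /seq_s /= !oE !EX !Ez !cMn !EJn conjCK opprK.
rewrite [E ((v * (n + s)%N%:Z)%:~R * _)](_ : _ = E ((v * s%:Z)%:~R * (2 * pi / (N * K)%N%:R)) *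
   E (- ((- v * n%:Z)%:~R * (2 * pi / (N * K)%N%:R)))); first by ring.
rewrite EM; congr E.
rewrite PoszD !intrM -?pmulrn !intrN -?pmulrn natrD; ring.
Qed.
End S.

Theorem theorem2 (R : realType) (N K Zx Zy : nat)
  (f : 'I_N -> 'I_K) (h : 'I_N -> nat -> R[i]) :
  (2 < N)%N -> odd N -> (0 < K)%N ->
  (0 < Zx)%N -> (Zx <= N)%N -> (0 < Zy)%N -> (Zy <= K)%N ->
  (forall a b : int, (- Zx%:Z < a < Zx%:Z)%R -> a != 0 -> (- Zy%:Z < b < Zy%:Z)%R ->
     (#|[pred x : 'I_N |
         ((f (addZN x a))%:Z - (f x)%:Z == b %[mod K%:Z])%Z]| <= 1)%N) ->
  (forall (i : 'I_N) (n : 'I_N), `|h i n| = 1) ->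
  (forall i j : 'I_N, i != j ->
     `|\sum_(n < N) h i n * (h j n)^*| <= 1) ->
  (forall i j : 'I_N, i != j -> forall v : 'I_N,
     `|\sum_(n < N) h i n * (h j n)^* * omega R N ^+ (n * v)%N| < N%:R) ->
  forall tau v : int, (- Zx%:Z < tau < Zx%:Z)%R -> (- Zy%:Z < v < Zy%:Z)%R ->
    (forall i : 'I_N, (tau, v) != (0, 0) ->
       `|AF (N * K) (seq_s f h i) (seq_s f h i) tau v| <= (K + Zx - 1)%:R) /\
    (forall i j : 'I_N, i != j ->
       `|AF (N * K) (seq_s f h i) (seq_s f h j) tau v| <= (K + Zx - 1)%:R).

Proof.
move=> N2 oddN K0 Zx0 ZxN Zy0 ZyK hf hu hc _ tau v htau hv.
have N0 : (0 < N)%N by apply: leq_trans N2.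
have key : forall i j : 'I_N, [|| tau != 0, v != 0 | i != j] ->
    `|AF (N * K) (seq_s f h i) (seq_s f h j) tau v| <= (K + Zx - 1)%:R.
  move=> i j cnd; rewrite /AF; case: ifP => tau0.
    have st : tau = `|tau|%N%:Z by rewrite abszE ger0_norm.
    have sZ : (`|tau| < Zx)%N by rewrite -ltz_nat -st; case/andP: htau.
    apply: (@Pbound R N K Zx Zy f h i j `|tau|%N v) => //.
    by move: cnd; rewrite {1}st.
  rewrite neg_red // normrM normE mul1r norm_conjC.
  have st : tau = - (`|tau|%N%:Z) by rewrite abszE ltr0_norm ?opprK // ltNge tau0.
  have sZ : (`|tau| < Zx)%N.
    by rewrite -ltz_nat -ltrN2 -st; case/andP: htau.
  apply: (@Pbound R N K Zx Zy f h j i `|tau|%N (- v)) => //.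
    by rewrite ltrNl opprK andbC ltrNl; case/andP: hv => -> ->.
  by rewrite absz_eq0; apply/orP; left; apply: contraFneq _ tau0 => ->.
split.
  move=> i H; apply: key; move: H; rewrite xpair_eqE negb_and => /orP[] ->.
    by [].
  by rewrite orbT.
by move=> i j H; apply: key; rewrite H !orbT.
Qed.
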